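(* Let $n,m\ge1$ and let $I=(\bar v_1,\dots,\bar v_m,\bar v)$ with $\bar v_i,\bar v\in\mathbb{Z}_3^n$. Set $\bar v'=\bar v+\sum_{i=1}^m\bar v_i$ and let $E_I$ be the equation $$\prod_{i=1}^m z_i^{-1}c_{\bar v_i}z_i=c_{\bar v'}$$ over $\mathbb{Z}_3^n\rtimes\mathbb{Z}_3^\ast$, where $c_{\bar w}=(\bar w,1)$. Then there exist $\varepsilon_1,\dots,\varepsilon_m\in\{0,1\}$ with $\sum_{i=1}^m\varepsilon_i\bar v_i=\bar v$ in $\mathbb{Z}_3^n$ if and only if $E_I$ has a solution $(z_1,\dots,z_m)$ in $\mathbb{Z}_3^n\rtimes\mathbb{Z}_3^\ast$.
   Context: $\mathbb{Z}_p^n\rtimes\mathbb{Z}_p^\ast$ is the set of pairs $(\bar x,\alpha)$ with $\bar x\in\mathbb{Z}_p^n$, $\alpha\in\mathbb{Z}_p^\ast$, with multiplication $(\bar x,\alpha)(\bar y,\beta)=(\bar x+\alpha\bar y,\alpha\beta)$ (scalar multiplication mod $p$). *)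

(* Defs.v *)
From mathcomp Require Import all_boot all_order all_algebra.
Set Implicit Arguments. Unset Strict Implicit. Unset Printing Implicit Defensive.
Import GRing.Theory.
Local Open Scope ring_scope.

(* The group Z_3^n ⋊ Z_3^*: pairs (x, a) with x in Z_3^n (row vectors over
   'F_3) and a a unit of 'F_3, with (x,a)(y,b) = (x + a y, a b). *)
Definition sd3 (n : nat) : Type := ('rV['F_3]_n * {unit 'F_3})%type.

Definition sd_mul n (g h : sd3 n) : sd3 n :=
  (g.1 + val g.2 *: h.1, (g.2 * h.2)%g).

Definition sd_one n : sd3 n := (0, 1%g).

Definition sd_inv n (g : sd3 n) : sd3 n :=
  (- (val (g.2^-1)%g *: g.1), (g.2^-1)%g).

Definition sd_c n (w : 'rV['F_3]_n) : sd3 n := (w, 1%g).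

Definition sd_prod n m (g : 'I_m -> sd3 n) : sd3 n :=
  foldr (@sd_mul n) (@sd_one n) [seq g i | i <- enum 'I_m].

(* Main.v *)
Require Import Defs.
From mathcomp Require Import all_boot all_order all_algebra.
Import GRing.Theory.
Local Open Scope ring_scope.
Lemma F3cases (x : 'F_3) : [|| x == 0, x == 1 | x == -1].
Proof. case: x => [[|[|[|k]]] Hk] //. Qed.
Lemma F3m1 : (-1 : 'F_3) = 1 + 1. Proof. by apply/eqP. Qed.

Lemma conjE n (z : sd3 n) w :
  sd_mul (sd_inv z) (sd_mul (sd_c w) z) = sd_c (val (z.2^-1)%g *: w).
Proof.
case: z => x a; rewrite /sd_mul /sd_inv /sd_c /=.
by rewrite scale1r mul1g mulVg scalerDr addrCA addNr addr0.
Qed.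

Lemma prodE n (s : seq 'I_n) m (f : 'I_n -> 'rV['F_3]_m) :
  foldr (@sd_mul m) (@sd_one m) [seq sd_c (f i) | i <- s] = sd_c (\sum_(i <- s) f i).
Proof.
elim: s => [|i s IH] /=; first by rewrite big_nil.
by rewrite IH big_cons /sd_mul /sd_c /= scale1r mul1g.
Qed.

Lemma unit_val (u : {unit 'F_3}) : val u = 1 + (val u == -1)%:R.
Proof.
have: val u != 0 by rewrite -unitfE; exact: valP.
move: (F3cases (val u)) => /or3P [/eqP->|/eqP->|/eqP->] // _; first by rewrite addr0. by rewrite eqxx F3m1.
Qed.

Theorem proposition4p6 (n m : nat) (hn : (1 <= n)%N) (hm : (1 <= m)%N)
    (vs : 'I_m -> 'rV['F_3]_n) (v : 'rV['F_3]_n) :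
  (exists eps : 'I_m -> bool, \sum_(i < m) (eps i)%:R *: vs i = v) <->
  (exists z : 'I_m -> sd3 n,
     sd_prod (fun i => sd_mul (sd_inv (z i)) (sd_mul (sd_c (vs i)) (z i)))
     = sd_c (v + \sum_(i < m) vs i)).
Proof.
have key : forall z : 'I_m -> sd3 n,
  sd_prod (fun i => sd_mul (sd_inv (z i)) (sd_mul (sd_c (vs i)) (z i)))
  = sd_c (\sum_(i < m) val ((z i).2^-1)%g *: vs i).
  move=> z; rewrite /sd_prod.
  under eq_map => i do rewrite conjE.
  rewrite -map_comp prodE; congr sd_c; by rewrite -enumT big_enum.
have split_sum : forall eps : 'I_m -> bool,
  \sum_(i < m) (1 + (eps i)%:R) *: vs i = \sum_(i < m) (eps i)%:R *: vs i + \sum_(i < m) vs i.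
  move=> eps; rewrite addrC -big_split /=; apply: eq_bigr => i _.
  by rewrite scalerDl scale1r.
split.
- case=> eps <-.
  have U : (-1 : 'F_3) \is a GRing.unit by rewrite unitrN1.
  exists (fun i => (0, if eps i then (Sub (-1) U : {unit 'F_3}) else 1%g)).
  rewrite key -split_sum; congr sd_c; apply: eq_bigr => i _ /=.
  case: (eps i) => /=.
    by rewrite invrN1 F3m1.
  by rewrite invr1 addr0.
- case=> z; rewrite key => -[] H.
  exists (fun i => val ((z i).2^-1)%g == -1).
  apply: (addIr (\sum_(i < m) vs i)); rewrite -split_sum -H.
  by apply: eq_bigr => i _; rewrite -unit_val.
Qed.
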